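(* Let $\epsilon\ge 0$, let $\psi=\frac{1+\epsilon+\sqrt{\epsilon^2+6\epsilon+5}}{2}$ and $z=\lfloor\psi\rfloor$. For every unweighted congestion game $\mathcal{G}$ with affine latency functions, $\epsilon\text{-PoA}(\mathcal{G})\le\frac{(1+\epsilon)(z^2+3z+1)}{2z-\epsilon}$.
   Context: A weighted congestion game consists of a finite set $[n]=\{1,\dots,n\}$ of players, a finite set $E$ of resources, for each player $i$ a weight $w_i>0$ and a nonempty finite strategy set $\Sigma_i\subseteq 2^E$, and for each resource $e$ a latency function $\ell_e:\mathbb{R}_{\ge 0}\to\mathbb{R}_{\ge 0}$. It is unweighted if $w_i=1$ for all $i$. Affine latency functions means $\ell_e(x)=\alpha_e x+\beta_e$ with $\alpha_e,\beta_e\ge 0$. For a strategy profile $S=(s_1,\dots,s_n)\in\prod_i\Sigma_i$, the congestion of $e$ is $L_e(S)=\sum_{i:\,e\in s_i}w_i$, the cost of player $i$ is $c_i(S)=\sum_{e\in s_i}\ell_e(L_e(S))$, and the social cost is $\mathrm{SUM}(S)=\sum_{i\in[n]}c_i(S)$; $S^*$ denotes a profile minimizing $\mathrm{SUM}$. For $t\in\Sigma_i$, $(S_{-i}\diamond t)$ denotes the profile obtained from $S$ by replacing $s_i$ with $t$. For $\epsilon\ge 0$, $S$ is an $\epsilon$-approximate pure Nash equilibrium ($\epsilon$-PNE) if $c_i(S)\le(1+\epsilon)c_i(S_{-i}\diamond t)$ for all $i\in[n]$ and all $t\in\Sigma_i$. The $\epsilon$-approximate price of anarchy is $\epsilon\text{-PoA}(\mathcal{G})=\max_{S\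 \epsilon\text{-PNE}}\mathrm{SUM}(S)/\mathrm{SUM}(S^* )$. *)

(* Defs.v *)
From HB Require Import structures.
From mathcomp Require Import all_boot.
From Stdlib Require Import Reals.

Set Implicit Arguments.
Unset Strict Implicit.
Unset Printing Implicit Defensive.

Local Open Scope R_scope.

Definition profile (n : nat) (E : finType) := 'I_n -> {set E}.

Definition feasible n (E : finType) (Sigma : 'I_n -> {set {set E}})
  (S : profile n E) : Prop := forall i, S i \in Sigma i.

Definition deviate n (E : finType) (S : profile n E) (i : 'I_n) (t : {set E})
  : profile n E := fun j => if j == i then t else S j.

Definition load n (E : finType) (S : profile n E) (e : E) : R :=
  INR #|[set i : 'I_n | e \in S i]|.

Definition latency (E : finType) (alpha beta : E -> R) (e : E) (x : R) : R :=
  alpha e * x + beta e.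

Definition cost n (E : finType) (alpha beta : E -> R) (S : profile n E)
  (i : 'I_n) : R :=
  \big[Rplus/0]_(e in S i) latency alpha beta e (load S e).

Definition social_cost n (E : finType) (alpha beta : E -> R) (S : profile n E)
  : R := \big[Rplus/0]_(i < n) cost alpha beta S i.

Definition eps_PNE (eps : R) n (E : finType) (Sigma : 'I_n -> {set {set E}})
  (alpha beta : E -> R) (S : profile n E) : Prop :=
  feasible Sigma S /\
  forall (i : 'I_n) (t : {set E}), t \in Sigma i ->
    cost alpha beta S i <= (1 + eps) * cost alpha beta (deviate S i t) i.

Definition optimal n (E : finType) (Sigma : 'I_n -> {set {set E}})
  (alpha beta : E -> R) (S : profile n E) : Prop :=
  feasible Sigma S /\
  forall T : profile n E, feasible Sigma T ->
    social_cost alpha beta S <= social_cost alpha beta T.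

Definition psi (eps : R) : R := (1 + eps + sqrt (eps ^ 2 + 6 * eps + 5)) / 2.

(* z = floor(psi); Int_part x is the floor of x (IZR (Int_part x) <= x < IZR (Int_part x) + 1). *)
Definition zfloor (eps : R) : R := IZR (Int_part (psi eps)).

Definition poa_bound (eps : R) : R :=
  let z := zfloor eps in (1 + eps) * (z ^ 2 + 3 * z + 1) / (2 * z - eps).

(* Main.v *)
Require Import Defs.
From HB Require Import structures.
From mathcomp Require Import all_boot.
From Stdlib Require Import Reals Lra Psatz ZArith.

Local Open Scope R_scope.

Lemma RplusA' : associative Rplus.
Proof. move=> x y z; by rewrite Rplus_assoc. Qed.
Lemma RplusC' : commutative Rplus.
Proof. move=> x y; by rewrite Rplus_comm. Qed.
Lemma Rplus0' : left_id 0 Rplus.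
Proof. move=> x; by rewrite Rplus_0_l. Qed.

HB.instance Definition _ := Monoid.isComLaw.Build R 0 Rplus RplusA' RplusC' Rplus0'.

Lemma iter_Rplus k x : ssrnat.iter k (Rplus x) 0 = INR k * x.
Proof.
elim: k => [|k IH] /=; first by lra.
rewrite IH; case: k {IH} => [|k] /=; lra.
Qed.

Lemma sum_scale (I : finType) (P : pred I) (F : I -> R) c :
  c * \big[Rplus/0]_(i | P i) F i = \big[Rplus/0]_(i | P i) (c * F i).
Proof.
apply: (big_endo (fun x => c * x)).
- move=> x y; lra.
- lra.
Qed.

Lemma sum_le (I : finType) (P : pred I) (F G : I -> R) :
  (forall i, P i -> F i <= G i) ->
  \big[Rplus/0]_(i | P i) F i <= \big[Rplus/0]_(i | P i) G i.
Proof.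
move=> H; apply: (big_ind2 Rle) => //; first lra.
move=> a b c d ? ?; lra.
Qed.

Lemma swap_sum n (E : finType) (T : profile n E) (g : E -> R) :
  \big[Rplus/0]_(i < n) \big[Rplus/0]_(e in T i) g e
  = \big[Rplus/0]_(e : E) (load T e * g e).
Proof.
transitivity (\big[Rplus/0]_(i < n) \big[Rplus/0]_(e : E)
                 (if e \in T i then g e else 0)).
  by apply: eq_bigr => i _; rewrite big_mkcond.
rewrite exchange_big /=; apply: eq_bigr => e _.
rewrite -big_mkcond /=.
rewrite (eq_bigl (fun i => i \in [set j : 'I_n | e \in T j])); last first.
  by move=> i; rewrite inE.
by rewrite big_const iter_Rplus.
Qed.

Lemma load_dev n (E : finType) (S : profile n E) i t e :
  load (deviate S i t) e <= load S e + 1.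
Proof.
rewrite /load.
have H : ssrnat.leq #|[set j : 'I_n | e \in deviate S i t j]|
          #|i |: [set j : 'I_n | e \in S j]|.
  apply: subset_leq_card; apply/subsetP => j; rewrite !inE /deviate.
  by case: eqP => // _ ->; rewrite orbT.
have H2 : ssrnat.leq #|i |: [set j : 'I_n | e \in S j]| (addn 1 #|[set j : 'I_n | e \in S j]|).
  by rewrite cardsU1; case: (i \in _).
have H3 := leq_trans H H2.
move/leP: H3 => /le_INR; rewrite plus_INR /=; lra.
Qed.

Lemma INR_ge0' k : 0 <= INR k.
Proof. apply: pos_INR. Qed.

Lemma core (a b : nat) (k : Z) :
  0 <= IZR k ->
  (2 * IZR k + 1) * (INR a + 1) * INR b <=
  INR a ^ 2 + (IZR k ^ 2 + 3 * IZR k + 1) * INR b ^ 2.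
Proof.
move=> hz.
set z := IZR k in hz *; set x := INR a.
have hx : 0 <= x by apply: pos_INR.
case: b => [|b]; first by rewrite /= ; nra.
case: b => [|b].
  rewrite /=.
  have [h|h] : (Z.of_nat a - k <= 0)%Z \/ (1 <= Z.of_nat a - k)%Z by lia.
  - apply IZR_le in h; rewrite minus_IZR -INR_IZR_INZ in h.
    rewrite -/x -/z in h; nra.
  - apply IZR_le in h; rewrite minus_IZR -INR_IZR_INZ in h.
    rewrite -/x -/z in h; nra.
have hy : 2 <= INR b.+2 by rewrite !S_INR; have := pos_INR b; lra.
set y := INR b.+2 in hy *.
have sq : 0 <= (x - (2*z+1)*y/2)^2 by apply: pow2_ge_0.
have h2 : 0 <= y * ((2*z+3/4)*y - (2*z+1)).
  apply Rmult_le_pos; first lra.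
  have : 0 <= z * (y - 2) by apply Rmult_le_pos; lra.
  lra.
nra.
Qed.

Lemma sum_lin (I : finType) (F G : I -> R) a b :
  \big[Rplus/0]_(i : I) (a * F i + b * G i)
  = a * \big[Rplus/0]_(i : I) F i + b * \big[Rplus/0]_(i : I) G i.
Proof. by rewrite big_split /= !sum_scale. Qed.

Lemma z_facts eps : 0 <= eps ->
  0 <= zfloor eps /\ eps + 1/2 < zfloor eps.
Proof.
move=> he.
have hs : eps + 2 <= sqrt (eps ^ 2 + 6 * eps + 5).
  rewrite -{1}(sqrt_pow2 (eps + 2)); last lra.
  apply: sqrt_le_1_alt; nra.
have [h1 h2] := base_Int_part (psi eps).
rewrite /zfloor; move: h2; rewrite /psi => h2.
split; lra.
Qed.

Theorem mainTheorem2 (eps : R) (heps : 0 <= eps)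
  (n : nat) (E : finType) (Sigma : 'I_n -> {set {set E}})
  (hSigma : forall i : 'I_n, Sigma i != set0)
  (alpha beta : E -> R)
  (halpha : forall e, 0 <= alpha e) (hbeta : forall e, 0 <= beta e)
  (S Sopt : profile n E)
  (hS : eps_PNE eps Sigma alpha beta S)
  (hopt : optimal Sigma alpha beta Sopt) :
  social_cost alpha beta S <= poa_bound eps * social_cost alpha beta Sopt.
Proof.
have [hfeas hNE] := hS.
have [hoptf _] := hopt.
have [hz0 hzb] := z_facts eps heps.
have hQ : social_cost alpha beta S =
   \big[Rplus/0]_(e : E) (load S e * latency alpha beta e (load S e)).
  by rewrite /social_cost /cost swap_sum.
have hO : social_cost alpha beta Sopt =
   \big[Rplus/0]_(e : E) (load Sopt e * latency alpha beta e (load Sopt e)).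
  by rewrite /social_cost /cost swap_sum.
have hP : social_cost alpha beta S <=
   \big[Rplus/0]_(e : E) (load Sopt e *
        ((1 + eps) * (alpha e * (load S e + 1) + beta e))).
  rewrite -swap_sum /social_cost.
  apply: sum_le => i _.
  apply: Rle_trans; first exact: (hNE i (Sopt i) (hoptf i)).
  rewrite -sum_scale; apply: Rmult_le_compat_l; first lra.
  have ht : deviate S i (Sopt i) i = Sopt i by rewrite /deviate eqxx.
  rewrite /cost ht; apply: sum_le => e _; rewrite /latency.
  have := @load_dev _ _ S i (Sopt i) e; have := halpha e; nra.
have hzk : zfloor eps = IZR (Int_part (psi eps)) by [].
rewrite hzk in hz0 hzb.
set z := IZR (Int_part (psi eps)) in hz0 hzb *.
have hpt : forall e : E,
  - (1 + eps) * (load S e * latency alpha beta e (load S e)) +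
  (2 * z + 1) * (load Sopt e * ((1 + eps) * (alpha e * (load S e + 1) + beta e)))
  <= ((1 + eps) * (z ^ 2 + 3 * z + 1)) *
     (load Sopt e * latency alpha beta e (load Sopt e)).
  move=> e; rewrite /latency /load.
  have hC := core #|[set j | e \in S j]| #|[set j | e \in Sopt j]| (Int_part (psi eps)) hz0.
  rewrite -/z in hC.
  set x := INR #|[set j | e \in S j]| in hC *.
  set y := INR #|[set j | e \in Sopt j]| in hC *.
  have hx : 0 <= x by apply: pos_INR.
  have hy : 0 <= y by apply: pos_INR.
  have h1 : 0 <= alpha e * (1 + eps) *
     (x ^ 2 + (z ^ 2 + 3 * z + 1) * y ^ 2 - (2 * z + 1) * (x + 1) * y).
    apply: Rmult_le_pos; last lra.
    apply: Rmult_le_pos; [exact: halpha | lra].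
  have h2 : 0 <= beta e * (1 + eps) * (x + (z ^ 2 + z) * y).
    apply: Rmult_le_pos; last nra.
    apply: Rmult_le_pos; [exact: hbeta | lra].
  nra.
have hsum : \big[Rplus/0]_(e : E) (- (1 + eps) * (load S e * latency alpha beta e (load S e)) +
  (2 * z + 1) * (load Sopt e * ((1 + eps) * (alpha e * (load S e + 1) + beta e))))
  <= \big[Rplus/0]_(e : E) (((1 + eps) * (z ^ 2 + 3 * z + 1)) *
     (load Sopt e * latency alpha beta e (load Sopt e))).
  by apply: sum_le => e _; exact: hpt.
rewrite sum_lin -sum_scale in hsum.
move: hsum; rewrite -hQ -hO => hsum.
set Q := social_cost alpha beta S in hP hsum *.
set O := social_cost alpha beta Sopt in hsum *.
set Pp := \big[Rplus/0]_(e : E) _ in hP hsum.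
rewrite /poa_bound hzk -/z.
have hd : 0 < 2 * z - eps by lra.
have hQd : Q * (2 * z - eps) <= (1 + eps) * (z ^ 2 + 3 * z + 1) * O by nra.
apply: (Rmult_le_reg_r (2 * z - eps)) => //.
replace ((1 + eps) * (z ^ 2 + 3 * z + 1) / (2 * z - eps) * O * (2 * z - eps))
  with ((1 + eps) * (z ^ 2 + 3 * z + 1) * O) by (field; lra).
exact: hQd.
Qed.
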